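(* Let $\Phi$ be a Young function, $Q\subset\mathbb{R}^N$ bounded open and $\{T(x)\}$ an $N$-dimensional dynamical system on $(\Omega,\mathscr{M},\mu)$. Then every $f\in\mathcal{C}(\overline{Q},L^\infty(\Omega))$ is admissible.
   Context: Young function: $\Phi:[0,\infty)\to[0,\infty)$ continuous, convex, $\Phi(t)>0$ for $t>0$, $\Phi(t)/t\to0$ at $0$, $\to\infty$ at $\infty$. $N$-dimensional dynamical system: invertible bimeasurable maps $T(x)$ of the probability space $(\Omega,\mathscr{M},\mu)$, $T(0)=\mathrm{id}$, $T(x_1+x_2)=T(x_1)\circ T(x_2)$, $\mu$-preserving, jointly measurable in $(x,\omega)$. $\mathcal{C}(\overline{Q},L^\infty(\Omega))$ is the space of continuous maps $\overline Q\to L^\infty(\Omega)$. An element $f\in L^\Phi(Q\times\Omega)$ is admissible if $f_T:(x,\omega)\mapsto f(x,T(x)\omega)$ defines an element of $L^\Phi(Q\times\Omega)$. *)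

(* Defs.v *)
From HB Require Import structures.
From mathcomp Require Import all_boot all_order all_algebra.
From mathcomp Require Import all_classical all_reals all_analysis.
From mathcomp Require Import ess_sup_inf.
Set Implicit Arguments. Unset Strict Implicit. Unset Printing Implicit Defensive.
Import Order.TTheory GRing.Theory Num.Theory.
Import numFieldNormedType.Exports.
Local Open Scope classical_set_scope.
Local Open Scope ring_scope.

Section lebN.
Context {R : realType}.
Local Open Scope ereal_scope.

Definition tcons n (p : n.-tuple R * R) : n.+1.-tuple R := [tuple of p.2 :: p.1].

Lemma measurable_tcons n : measurable_fun [set: n.-tuple R * R] (@tcons n).
Proof. exact: measurable_cons. Qed.

Variables (n : nat) (m : {measure set (n.-tuple R) -> \bar R}).

Definition lebS : set (n.+1.-tuple R) -> \bar R :=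
  pushforward (m \x (@lebesgue_measure R)) (@tcons n).

Let lebS0 : lebS set0 = 0.
Proof. by rewrite /lebS /pushforward preimage_set0 measure0. Qed.

Let lebS_ge0 A : 0 <= lebS A.
Proof. rewrite /lebS /pushforward; exact: (measure_ge0 (m \x (@lebesgue_measure R))). Qed.

Let lebS_sigma_additive : semi_sigma_additive lebS.
Proof.
move=> F mF tF mUF; rewrite /lebS /pushforward preimage_bigcup.
apply: measure_semi_sigma_additive.
- by move=> k; rewrite -[X in measurable X]setTI; exact: measurable_tcons.
- apply/trivIsetP => /= i j _ _ ij; rewrite -preimage_setI.
  by move/trivIsetP : tF => /(_ _ _ _ _ ij) ->//; rewrite preimage_set0.
- by rewrite -preimage_bigcup -[X in measurable X]setTI; exact: measurable_tcons.
Qed.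

HB.instance Definition _ := isMeasure.Build _ _ _ lebS lebS0 lebS_ge0 lebS_sigma_additive.
End lebN.

Fixpoint lebN {R : realType} (n : nat) : {measure set (n.-tuple R) -> \bar R} :=
  match n with
  | 0 => \d_ [tuple]
  | k.+1 => lebS (lebN k)
  end.

Section geometry.
Context {R : realType} {n : nat}.
Implicit Types (x y : n.-tuple R) (Q : set (n.-tuple R)).

Definition tdist x y : R := \big[Num.max/0]_(i < n) `|tnth x i - tnth y i|.
Definition tadd x y : n.-tuple R := [tuple tnth x i + tnth y i | i < n].
Definition tzero : n.-tuple R := [tuple 0 | i < n].

Definition topen Q :=
  forall x, Q x -> exists2 e : R, 0 < e & forall y, tdist x y < e -> Q y.
Definition tbounded Q :=
  exists M : R, forall x, Q x -> forall i, `|tnth x i| <= M.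
Definition tclosure Q : set (n.-tuple R) :=
  [set x | forall e : R, 0 < e -> exists2 y, Q y & tdist x y < e].
End geometry.

Definition young {R : realType} (Phi : R -> R) : Prop :=
  {within `[0%R, +oo[, continuous Phi} /\
  (forall s t a : R, 0 <= s -> 0 <= t -> 0 <= a <= 1 ->
     Phi (a * s + (1 - a) * t) <= a * Phi s + (1 - a) * Phi t) /\
  (forall t : R, 0 <= t -> 0 <= Phi t) /\
  (forall t : R, 0 < t -> 0 < Phi t) /\
  (Phi t / t @[t --> 0^'+] --> 0) /\
  (Phi t / t @[t --> +oo] --> +oo).

Definition dynamical_system {R : realType} {d} {Omega : measurableType d} {N : nat}
  (mu : {measure set Omega -> \bar R}) (T : N.-tuple R -> Omega -> Omega) : Prop :=
  (forall x, measurable_fun [set: Omega] (T x) /\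
     exists Tinv : Omega -> Omega,
       [/\ cancel (T x) Tinv, cancel Tinv (T x) & measurable_fun [set: Omega] Tinv]) /\
  (forall w, T tzero w = w) /\
  (forall x1 x2 w, T (tadd x1 x2) w = T x1 (T x2 w)) /\
  (forall x A, measurable A -> mu (T x @^-1` A) = mu A) /\
  measurable_fun [set: N.-tuple R * Omega] (fun p => T p.1 p.2).

Section Linfty.
Context {R : realType} {d} {Omega : measurableType d}.
Variable mu : {measure set Omega -> \bar R}.

Definition Linfty_elt (g : Omega -> R) : Prop :=
  measurable_fun [set: Omega] g /\ (ess_sup mu (fun w => (`|g w|)%:E) < +oo)%E.

Definition Linfty_dist (g h : Omega -> R) : \bar R :=
  ess_sup mu (fun w => (`|g w - h w|)%:E).

Definition C_closure_Linfty {N : nat} (Q : set (N.-tuple R))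
    (f : N.-tuple R -> Omega -> R) : Prop :=
  (forall x, tclosure Q x -> Linfty_elt (f x)) /\
  (forall x, tclosure Q x -> forall e : R, 0 < e ->
     exists2 delta : R, 0 < delta &
       forall y, tclosure Q y -> tdist x y < delta ->
         (Linfty_dist (f y) (f x) <= e%:E)%E).
End Linfty.

Definition in_Orlicz {R : realType} {d} {X : measurableType d} (Phi : R -> R)
    (m : {measure set X -> \bar R}) (D : set X) (g : X -> R) : Prop :=
  measurable_fun D g /\
  exists2 l : R, 0 < l & (\int[m]_(z in D) (Phi (`|g z| / l))%:E < +oo)%E.

Definition admissible {R : realType} {d} {Omega : measurableType d} {N : nat}
    (Phi : R -> R) (mu : probability Omega R) (Q : set (N.-tuple R))
    (T : N.-tuple R -> Omega -> Omega) (f : N.-tuple R -> Omega -> R) : Prop :=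
  exists g : N.-tuple R * Omega -> R,
    in_Orlicz Phi ((lebN N) \x mu)%E (Q `*` [set: Omega]) g /\
    (\forall x \ae lebN N, Q x -> \forall w \ae mu, g (x, w) = f x (T x w)).

(* Main.v *)
Require Import Defs.
From HB Require Import structures.
From mathcomp Require Import all_boot all_order all_algebra.
From mathcomp Require Import all_classical all_reals all_analysis.
From mathcomp Require Import ess_sup_inf.
From mathcomp Require Import ring lra.
From mathcomp Require Import measurable_realfun.
Set Implicit Arguments. Unset Strict Implicit. Unset Printing Implicit Defensive.
Import Order.TTheory GRing.Theory Num.Theory.
Import numFieldNormedType.Exports.
Local Open Scope classical_set_scope.
Local Open Scope ring_scope.
Section tdist.
Context {R : realType} {n : nat}.
Implicit Types x y z : n.-tuple R.

Lemma tdist_ge0 x y : 0 <= tdist x y.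
Proof. by rewrite /tdist; elim/big_ind: _ => // a b ? ?; rewrite le_max; apply/orP; left. Qed.

Lemma tdist_ge x y i : `|tnth x i - tnth y i| <= tdist x y.
Proof. rewrite /tdist; exact: (le_bigmax _ (fun i => `|tnth x i - tnth y i|) i). Qed.

Lemma tdist_lt x y e : 0 < e -> (forall i, `|tnth x i - tnth y i| < e) -> tdist x y < e.
Proof. by move=> e0 H; rewrite /tdist; apply: bigmax_lt. Qed.

Lemma tdist_le x y e : 0 <= e -> (forall i, `|tnth x i - tnth y i| <= e) -> tdist x y <= e.
Proof. by move=> e0 H; rewrite /tdist; apply: bigmax_le. Qed.

Lemma tdistC x y : tdist x y = tdist y x.
Proof. by rewrite /tdist; apply: eq_bigr => i _; rewrite distrC. Qed.

Lemma tdistxx x : tdist x x = 0.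
Proof.
apply/eqP; rewrite eq_le tdist_ge0 andbT; apply: tdist_le => // i.
by rewrite subrr normr0.
Qed.

Lemma tdist_triangle x y z : tdist x z <= tdist x y + tdist y z.
Proof.
apply: tdist_le; first by rewrite addr_ge0 // tdist_ge0.
move=> i; apply: (le_trans (y := `|tnth x i - tnth y i| + `|tnth y i - tnth z i|)).
  by rewrite (le_trans _ (ler_normD _ _)) // addrA subrK.
by apply: lerD; apply: tdist_ge.
Qed.

Lemma measurable_tdist c : measurable_fun [set: n.-tuple R] (fun y => tdist y c).
Proof.
rewrite /tdist; elim: (index_enum _) => [|i s IH].
  by under eq_fun do rewrite big_nil; exact: measurable_cst.
under eq_fun do rewrite big_cons.
apply: measurable_realfun.measurable_maxr => //.
apply: measurableT_comp => //.
apply: measurable_realfun.measurable_funB => //.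

exact: measurable_tnth.
Qed.

Lemma measurable_ball c r : measurable [set y : n.-tuple R | tdist y c < r].
Proof.
have := measurable_tdist c measurableT (measurable_itv `]-oo, r[).
rewrite setTI; congr measurable; apply/seteqP; split => y /=; rewrite in_itv //=.
Qed.
End tdist.

Section ratpts.
Context {R : realType} {n : nat}.

Definition ptup (t : n.-tuple rat) : n.-tuple R := [tuple ratr (tnth t i) | i < n].

Lemma approx_rat (x : n.-tuple R) e : 0 < e -> exists t, tdist x (ptup t) < e.
Proof.
move=> e0.
have /choice[g Hg] : forall i : 'I_n, exists q : rat, `|tnth x i - ratr q| < e.
  move=> i; have hlt : tnth x i - e < tnth x i + e by rewrite ltrD2l gtrN.
  have [q] := rat_in_itvoo hlt.
  rewrite in_itv /= => /andP[h1 h2]; exists q.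
  by rewrite ltr_norml; apply/andP; split; lra.
exists [tuple g i | i < n]; apply: tdist_lt => // i.
by rewrite /ptup !tnth_mktuple; apply: Hg.
Qed.

Lemma open_dense (Q : set (n.-tuple R)) x e : topen Q -> Q x -> 0 < e ->
  exists t, Q (ptup t) /\ tdist x (ptup t) < e.
Proof.
move=> oQ Qx e0; have [e1 e10 He1] := oQ x Qx.
have [t Ht] := approx_rat x (ltac:(by rewrite lt_min e0 e10) : 0 < Num.min e e1).
exists t; split; last by apply: (lt_le_trans Ht); rewrite ge_min lexx.
by apply: He1; apply: (lt_le_trans Ht); rewrite ge_min lexx orbT.
Qed.

Lemma open_measurable (Q : set (n.-tuple R)) : topen Q -> measurable Q.
Proof.
move=> oQ.
pose S (p : n.-tuple rat * rat) := [set y | tdist y (ptup p.1) < ratr p.2 /\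
   (forall z, tdist z (ptup p.1) < ratr p.2 -> Q z)].
have -> : Q = \bigcup_p S p.
  apply/seteqP; split => [x Qx|y [p _ [H1 H2]]]; last exact: H2 _ H1.
  have [e e0 He] := oQ x Qx.
  have he2 : (0:R) < e / 2 by rewrite divr_gt0.
  have [r] := rat_in_itvoo he2.
  rewrite in_itv /= => /andP[r0 re].
  have [t Ht] := approx_rat x r0.
  exists (t, r) => //; split => /=; first exact: Ht.
  move=> z Hz; apply: He.
  apply: (le_lt_trans (tdist_triangle x (ptup t) z)).
  rewrite tdistC in Hz.
  apply: (lt_le_trans (ltrD Ht Hz)).
  lra.
have cU : countable [set: (n.-tuple rat * rat)%type] by exact: countableP.
apply: (countable_bigcupT_measurable cU).
move=> p; have [H|H] := pselect (forall z, tdist z (ptup p.1) < ratr p.2 -> Q z).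
  rewrite (_ : S p = [set y | tdist y (ptup p.1) < ratr p.2]).
    exact: measurable_ball.
  by apply/seteqP; split => y /= [].
rewrite (_ : S p = set0) //; apply/seteqP; split => y //= [_ H2]; exact: H.
Qed.
End ratpts.

Section idx.
Context {R : realType} {n : nat} (Q : set (n.-tuple R)).

Definition ptj (j : nat) : n.-tuple R :=
  if @unpickle (n.-tuple rat) j is Some t then ptup t else tzero.

Definition Pk k j x := Q (ptj j) /\ tdist x (ptj j) < k.+1%:R^-1.

Lemma Pk_ex k x : topen Q -> Q x -> exists j, Pk k j x.
Proof.
move=> oQ Qx; have hk : (0:R) < k.+1%:R^-1 by rewrite invr_gt0 ltr0Sn.
have [t [Qt Ht]] := open_dense oQ Qx hk.
by exists (pickle t); rewrite /Pk /ptj pickleK.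
Qed.

Definition idx k x : nat :=
  if pselect (exists j, Pk k j x) is left h then
    ex_minn (ex_intro (fun j => `[< Pk k j x >]) _ (asboolT (projT2 (cid h))))
  else 0%N.

Lemma idxP k x : (exists j, Pk k j x) ->
  Pk k (idx k x) x /\ forall i, (i < idx k x)%N -> ~ Pk k i x.
Proof.
rewrite /idx; case: pselect => // h _.
case: ex_minnP => m /asboolP Pm Hmin; split => // i lt Pi.
by have := Hmin i (asboolT Pi); rewrite leqNgt lt.
Qed.

Lemma measurable_Pk k j : measurable [set x | Pk k j x].
Proof.
have [H|H] := pselect (Q (ptj j)).
  rewrite (_ : [set x | _] = [set y | tdist y (ptj j) < k.+1%:R^-1]).
    exact: measurable_ball.
  by apply/seteqP; split => y /= => [[]|]//.
by rewrite (_ : [set x | _] = set0) //; apply/seteqP; split => y //= [].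
Qed.

Definition Ek k j := [set x | Q x /\ idx k x = j].

Lemma Ek_eq k j : topen Q -> Ek k j =
  (Q `&` [set x | Pk k j x]) `\` \bigcup_(i in [set i | (i < j)%N]) [set x | Pk k i x].
Proof.
move=> oQ; apply/seteqP; split => x /=.
  move=> [Qx <-]; have [P1 P2] := idxP (Pk_ex k oQ Qx).
  by split => // -[i /= ilt]; apply: P2.
move=> [[Qx Pj] Hn]; split => //.
have [P1 P2] := idxP (Pk_ex k oQ Qx).
have [lt|lt|//] := ltngtP (idx k x) j.
- by exfalso; apply: Hn; exists (idx k x).
- by exfalso; exact: P2 j lt Pj.
Qed.

Lemma measurable_Ek k j : topen Q -> measurable (Ek k j).
Proof.
move=> oQ; rewrite Ek_eq //; apply: measurableD.
  by apply: measurableI; [exact: open_measurable|exact: measurable_Pk].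
by apply: bigcup_measurable => i _; exact: measurable_Pk.
Qed.

Lemma Q_bigcup_Ek k : Q = \bigcup_j Ek k j.
Proof.
by apply/seteqP; split => [x Qx|x [j _ []]//]; exists (idx k x).
Qed.
End idx.

Section compactness.
Context {R : realType} {n : nat}.

Definition phi (t : n.-tuple R) : 'rV[R]_n := \row_i tnth t i.

Lemma ball_phi x y (e : R) : 0 < e -> ball (phi x) e (phi y) <-> tdist x y < e.
Proof.
move=> e0; rewrite mx_norm_ball /ball_ /= [X in X < _]/Num.norm /= mx_normrE; split.
  move/bigmax_ltP => [_ H]; apply: tdist_lt => // i.
  by have := H (ord0, i) isT; rewrite !mxE.
move=> H; apply/bigmax_ltP; split => // -[a i] _ /=.
rewrite !mxE; apply: le_lt_trans H; exact: tdist_ge.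
Qed.

Lemma phi_surj (v : 'rV[R]_n) : v = phi [tuple v ord0 i | i < n].
Proof. by apply/rowP => i; rewrite mxE tnth_mktuple ord1. Qed.

Lemma compact_closure (Q : set (n.-tuple R)) : tbounded Q -> compact (phi @` tclosure Q).
Proof.
move=> [M0 HM0]; apply: bounded_closed_compact.
  rewrite /bounded_near /=; near=> M => v [x Cx <-].
  rewrite /= [X in X <= _]/Num.norm /= mx_normrE.
  have HM : `|M0| + 1 < M by near: M; apply: nbhs_pinfty_gt.
  apply: bigmax_le => [|[a i] _ /=].
    by apply: le_trans (ltW HM); rewrite addr_ge0.
  rewrite !mxE; apply: le_trans (ltW HM).
  have [z Qz Hz] := Cx 1 ltr01.
  have h1 := tdist_ge x z i; have h2 := HM0 z Qz i.
  have h3 : `|tnth x i| <= `|tnth x i - tnth z i| + `|tnth z i| by rewrite (le_trans _ (ler_normD _ _)) // subrK.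
  have h4 := ler_norm M0.
  lra.
move=> v Cv; rewrite (phi_surj v); exists [tuple v ord0 i | i < n] => //.
move=> e e0.
have e20 : 0 < e / 2 by rewrite divr_gt0.
have [_ [[y Cy <-] Hb]] := Cv _ (nbhsx_ballx v _ e20).
rewrite (phi_surj v) in Hb; move/(ball_phi _ _ e20): Hb => Hb.
have [z Qz Hz] := Cy _ e20.
exists z => //; apply: le_lt_trans (tdist_triangle _ y _) _.
lra.
Unshelve. all: by end_near.
Qed.
End compactness.

Lemma le_sum_mem {R : realType} {I : eqType} (s : seq I) (F : I -> R) y :
  (forall i, 0 <= F i) -> y \in s -> F y <= \sum_(i <- s) F i.
Proof.
move=> F0; elim: s => // a s IH; rewrite in_cons big_cons => /orP[/eqP->|/IH h].
  by rewrite lerDl sumr_ge0.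
by apply: le_trans h _; rewrite lerDr.
Qed.

Section bound.
Context {R : realType} {d} {Omega : measurableType d} {n : nat}.
Context (mu : {measure set Omega -> \bar R}).
Local Open Scope ereal_scope.

Lemma f_bounded (Q : set (n.-tuple R)) (f : n.-tuple R -> Omega -> R) :
  tbounded Q -> C_closure_Linfty mu Q f ->
  exists C : R, (0 < C)%R /\ forall x, tclosure Q x ->
    ess_sup mu (fun w => (`|f x w|)%:E) <= C%:E.
Proof.
move=> bQ [fL fC].
have /choice[del Hdel] : forall y, exists del : R, tclosure Q y -> (0 < del)%R /\
    forall y', tclosure Q y' -> (tdist y y' < del)%R ->
      Linfty_dist mu (f y') (f y) <= 1%:E.
  move=> y; have [Cy|nCy] := pselect (tclosure Q y); last by exists 1%R.
  by have [del d0 Hd] := fC y Cy 1%R ltr01; exists del.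
have := compact_closure bQ; rewrite compact_cover => /(_ _ (tclosure Q)
  (fun y => ball (phi y) (del y))) [].
- by move=> i _; exact: ball_open.
- move=> v [x Cx <-]; exists x => //; apply: ballxx; exact: (Hdel x Cx).1.
move=> D' D'D Hcov.
pose es y := ess_sup mu (fun w => (`|f y w|)%:E).
exists (1 + \sum_(y <- finmap.enum_fset D') `|fine (es y)|)%R; split.
  by rewrite ltr_pwDl // sumr_ge0.
move=> x Cx.
have [y /= yD' Hb] := Hcov (phi x) (ex_intro2 _ _ x Cx erefl).
have Cy : tclosure Q y by have := D'D y yD'; rewrite inE.
have [d0 Hd] := Hdel y Cy.
have H1 := Hd x Cx (proj1 (ball_phi _ _ d0) Hb).
have Hy : es y <= (`|fine (es y)|)%:E.
  have := (fL y Cy).2; rewrite -/(es y); case: (es y) => [r _| //|_].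
    by rewrite lee_fin ler_norm.
  by rewrite leNye.
apply: (@le_trans _ _ (ess_sup mu ((fun w => (`|f x w - f y w|)%:E) \+ (fun w => (`|f y w|)%:E)))).
  apply: le_ess_sup; apply: aeW => w /=; rewrite -EFinD lee_fin.
  by rewrite (le_trans _ (ler_normD _ _)) // subrK.
apply: le_trans (ess_supD _ _ _) _.
rewrite EFinD; apply: leeD; first exact: H1.
apply: le_trans Hy _; rewrite lee_fin.
by apply: (le_sum_mem (F := fun y => `|fine (es y)|%R)).
Qed.
End bound.

Section lebfin.
Context {R : realType}.
Local Open Scope ereal_scope.

Lemma tdist0 n (x : n.-tuple R) i : (`|tnth x i| <= tdist x tzero)%R.
Proof. by have := tdist_ge x tzero i; rewrite /tzero tnth_mktuple subr0. Qed.

Lemma lebN_ball_fin n (M : R) : (0 < M)%R ->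
  lebN n [set x : n.-tuple R | (tdist x tzero < M)%R] < +oo.
Proof.
move=> M0; elim: n => [|n IH].
  by rewrite /= diracE ltry.
rewrite /= /lebS /pushforward.
set B := [set x : n.-tuple R | (tdist x tzero < M)%R].
set A := (X in _ (_ @^-1` X) < _).
have H : (lebN n \x lebesgue_measure) (@tcons R n @^-1` A) <= (lebN n \x lebesgue_measure) (B `*` `](- M)%R, M%R[%classic).
  apply: le_measure; rewrite ?inE.
  - rewrite -[X in measurable X]setTI; apply: measurable_tcons => //.
    exact: measurable_ball.
  - by apply: measurableX; [exact: measurable_ball|exact: measurable_itv].
  - move=> [t r] /= H; split.
      apply: tdist_lt => // i; rewrite /tzero tnth_mktuple subr0.
      apply: le_lt_trans H; have := tdist0 (tcons (t, r)) (lift ord0 i).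
      by rewrite /tcons /= tnthS.
    rewrite in_itv /= -ltr_norml; apply: le_lt_trans H.
    by have := tdist0 (tcons (t, r)) ord0; rewrite /tcons /= tnth0.
apply: le_lt_trans H _.
rewrite product_measure1E; [|exact: measurable_ball|exact: measurable_itv].
apply: lte_mul_pinfty => //.
  by rewrite ge0_fin_numE.
by have := lebesgue_measure_itv `](- M)%R, M%R[; rewrite /= => ->; case: ifP => _; rewrite ?ltry.
Qed.
End lebfin.

Section main.
Context {R : realType} {d} {Omega : measurableType d} {n : nat}.
Context (mu : probability Omega R) (Q : set (n.-tuple R))
  (T : n.-tuple R -> Omega -> Omega) (f : n.-tuple R -> Omega -> R).

Definition gk k (z : n.-tuple R * Omega) : R := f (ptj (idx Q k z.1)) (T z.1 z.2).

Lemma measurable_gk k : topen Q -> dynamical_system mu T ->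
  (forall x, tclosure Q x -> measurable_fun [set: Omega] (f x)) ->
  measurable_fun (Q `*` [set: Omega]) (gk k).
Proof.
move=> oQ [_ [_ [_ [_ mT]]]] mf.
have -> : Q `*` [set: Omega] = \bigcup_j (Ek Q k j `*` [set: Omega]).
  apply/seteqP; split => [[x w] /= [Qx _]|[x w] [j _ /= [[Qx _] _]]] //.
  by exists (idx Q k x) => //.
apply/measurable_fun_bigcup => [j|j].
  by apply: measurableX => //; exact: measurable_Ek.
have [H|H] := pselect (Q (ptj j)).
  apply: (eq_measurable_fun (fun z => f (ptj j) (T z.1 z.2))).
    by move=> [x w]; rewrite inE => -[[_ Hj] _]; rewrite /gk /= Hj.
  apply: measurable_funS (measurableT) _ _ => //.
  apply: measurableT_comp mT; apply: mf; by exists (ptj j) => //; rewrite tdistxx.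
have -> : Ek Q k j = set0.
  apply/seteqP; split => x // [Qx Hj]; apply: H.
  by have [[Qp _] _] := idxP (Pk_ex k oQ Qx); rewrite -Hj.
by rewrite set0X; exact: measurable_fun_set0.
Qed.

Lemma ae_shift (P : Omega -> Prop) x : dynamical_system mu T ->
  (\forall v \ae mu, P v) -> \forall w \ae mu, P (T x w).
Proof.
move=> [DT1 [_ [_ [DTp _]]]] [N [mN N0 sub]]; exists (T x @^-1` N); split.
- by have := (DT1 x).1 measurableT N mN; rewrite setTI.
- by rewrite DTp.
- by move=> w /= nP; apply: sub.
Qed.

Lemma gk_cvg x w : tclosure Q x -> topen Q -> Q x ->
  C_closure_Linfty mu Q f ->
  (forall k, (`|f (ptj (idx Q k x)) (T x w) - f x (T x w)|)%:E <=
     Linfty_dist mu (f (ptj (idx Q k x))) (f x))%E ->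
  (fun k => gk k (x, w)) @ \oo --> f x (T x w).
Proof.
move=> Cx oQ Qx [_ fC] H; apply/cvgrPdist_lt => e e0.
have e20 : 0 < e / 2 by rewrite divr_gt0.
have [del d0 Hd] := fC x Cx _ e20.
near=> k.
have [[Qq Hq] _] := idxP (Pk_ex k oQ Qx).
have Cq : tclosure Q (ptj (idx Q k x)).
  by move=> e' e'0; exists (ptj (idx Q k x)) => //; rewrite tdistxx.
have h1 : (k.+1%:R^-1 < del) by near: k; exact: (near_infty_natSinv_lt (PosNum d0)).
have := Hd _ Cq (lt_trans Hq h1).
move=> /(le_trans (H k)); rewrite lee_fin /gk /= distrC => h2.
by apply: le_lt_trans h2 _; lra.
Unshelve. all: by end_near.
Qed.
End main.

Unset Implicit Arguments.
Theorem mainTheorem6 (R : realType) (d : measure_display) (Omega : measurableType d)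
  (mu : probability Omega R) (N : nat) (Phi : R -> R) (Q : set (N.-tuple R))
  (T : N.-tuple R -> Omega -> Omega) (f : N.-tuple R -> Omega -> R) :
  young Phi -> topen Q -> tbounded Q -> dynamical_system mu T ->
  C_closure_Linfty mu Q f ->
  admissible Phi mu Q T f.
Proof.
move=> [Phic [Phiconv [Phi0 _]]] oQ bQ DT fCL.
have [C [C0 HC]] := f_bounded bQ fCL.
pose h z := fine (limn_esup (fun k => (gk Q T f k z)%:E)).
pose g z := Num.min C (Num.max (- C) (h z)).
have mD : measurable (Q `*` [set: Omega]) := measurableX (open_measurable oQ) measurableT.
have mfx : forall x, tclosure Q x -> measurable_fun setT (f x) := fun x Cx => (fCL.1 x Cx).1.
have mg : measurable_fun (Q `*` setT) g.
  apply: measurable_realfun.measurable_minr; first exact: measurable_cst.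
  apply: measurable_realfun.measurable_maxr; first exact: measurable_cst.
  rewrite /h; have mfine : measurable_fun [set: \bar R] (@fine R).
    exact: measurable_realfun.fine_measurable.
  apply: (measurableT_comp mfine).
  apply: measurable_realfun.measurable_fun_limn_esup => k.
  apply/measurable_EFinP; apply: (measurable_gk (mu := mu)) => //.
have gC : forall z, `|g z| <= C.
  move=> z; rewrite /g ler_norml; apply/andP; split.
    by rewrite le_min le_max lexx orTb andbT; lra.
  by rewrite ge_min lexx.
exists g; split.
  split => //; exists 1 => //.
  under eq_fun do rewrite divr1.
  set B := Num.max (Phi 0) (Phi C).
  have PhiB : forall v, 0 <= v <= C -> Phi v <= B.
    move=> v /andP[v0 vC].
    have a0 : 0 <= v / C by rewrite divr_ge0 // ltW.
    have a1 : v / C <= 1 by rewrite ler_pdivrMr // mul1r.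
    have := Phiconv C 0 (v / C) (ltW C0) (lexx 0) (ltac:(by rewrite a0 a1)).
    rewrite mulr0 addr0 divfK ?gt_eqF // => H; apply: le_trans H _.
    have hB1 : Phi C <= B by rewrite le_max lexx orbT.
    have hB0 : Phi 0 <= B by rewrite le_max lexx.
    move: (v / C) a0 a1 => a a0 a1; nra.
  have mf1 : measurable_fun (Q `*` [set: Omega]) (fun z => (Phi `|g z|)%:E).
    apply: measurableT_comp; first exact: measurable_realfun.EFin_measurable.
    have mPhi : measurable_fun (`[0, +oo[%classic : set R) Phi.
      exact: subspace_continuous_measurable_fun.
    have mn : measurable_fun (Q `*` [set: Omega]) (fun z => `|g z|).
      apply: measurableT_comp => //; exact: normr_measurable.
    apply: (measurable_comp _ _ mPhi mn).
    - exact: measurable_itv.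
    - by move=> _ [z _ <-]; rewrite /= in_itv /= andbT normr_ge0.
  apply: (le_lt_trans (ge0_le_integral _ mD _ mf1 (measurable_cst (B%:E)) _)).
  - by move=> z _; rewrite lee_fin Phi0.
  - by move=> z _; rewrite lee_fin PhiB // normr_ge0 gC.
  rewrite integral_cst //.
  apply: lte_mul_pinfty => //.
    by rewrite lee_fin le_max Phi0 ?lexx.
  have [M0 HM0] := bQ.
  have M10 : 0 < `|M0| + 1 by rewrite ltr_pwDr.
  have sub : Q `*` [set: Omega] `<=` [set x | tdist x tzero < `|M0| + 1] `*` [set: Omega].
    move=> [x w] [/= Qx _]; split => //=.
    apply: (le_lt_trans (tdist_le (e := `|M0|) _ _)) => //; last by rewrite ltrDl.
    move=> i; rewrite /tzero tnth_mktuple subr0; apply: le_trans (HM0 x Qx i) _.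
    exact: ler_norm.
  apply: (le_lt_trans (le_measure _ _ _ sub)); rewrite ?inE //.
    by apply: measurableX => //; exact: measurable_ball.
  have E := product_measure1E (lebN N) mu (measurable_ball tzero (`|M0| + 1)) measurableT.
  apply: (@le_lt_trans _ _ (lebN N [set y | (tdist y tzero < `|M0| + 1)%R] * mu [set: Omega])%E).
    by rewrite -E; exact: lexx.
  rewrite probability_setT mule1.
  exact: lebN_ball_fin.
apply: aeW => x Qx.
have Cx : tclosure Q x by move=> e e0; exists x => //; rewrite tdistxx.
have H1 : \forall v \ae mu, forall k,
    ((`|f (ptj (idx Q k x)) v - f x v|)%:E <= Linfty_dist mu (f (ptj (idx Q k x))) (f x))%E.
  by apply: ae_foralln => k; exact: ess_sup_ge.
have H2 : \forall v \ae mu, ((`|f x v|)%:E <= C%:E)%E.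
  by apply: filterS (ess_sup_ge mu (fun w => (`|f x w|)%:E)) => v hv; apply: le_trans hv (HC x Cx).
apply: filterS2 (ae_shift x DT H1) (ae_shift x DT H2) => w hA hB.
have cv := gk_cvg Cx oQ Qx fCL hA.
have Hlim : limn_esup (fun k => (gk Q T f k (x, w))%:E) = (f x (T x w))%:E.
  apply: (cvg_limn_einf_sup _).2.
  apply: cvg_EFin; last exact: cv.
  by apply: nearW => k.
rewrite /g /h Hlim /=.
move: hB; rewrite lee_fin ler_norml => /andP[b1 b2].
by rewrite max_r // min_r.
Qed.
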